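(* Let $G$ be an undirected graph and $n\ge 4$ an even integer. Then $G$ admits a homomorphism to the undirected cycle $C_{n-1}$ on $n-1$ vertices if and only if $G$ admits an orientation that contains no induced subgraph isomorphic to a member of $F_n$.
   Context: Graph homomorphisms are vertex maps sending edges to edges (for digraphs: arcs to arcs). An orientation of an undirected graph $G$ is an oriented graph obtained by choosing exactly one direction for each edge. For $n\ge 3$, $Q_n$ is the oriented path $(q_0,\dots,q_{n-1})$ on $n$ distinct vertices, with exactly one arc between $q_i$ and $q_{i+1}$ for each $i$ and no other arcs, such that: the first two arcs are $q_0\to q_1$ and $q_1\to q_2$; the subpath $(q_1,\dots,q_{n-2})$ is alternating (consecutive arcs have opposite directions); and the last two arcs have the same direction. For even $n\ge4$, $F_n$ denotes the (finite, up to isomorphism) set of surjective homomorphic images of $Q_n$, i.e. the oriented graphs $H$ (no loops, no pair of opposite arcs) for which there is a homomorphism $Q_n\to H$ that is surjective on vertices. *)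

(* Defs.v *)
From mathcomp Require Import all_boot.
Set Implicit Arguments. Unset Strict Implicit. Unset Printing Implicit Defensive.

Definition cycle_adj (m : nat) (i j : 'I_m) : bool :=
  (nat_of_ord j == i.+1 %% m) || (nat_of_ord i == j.+1 %% m).

Definition hom_to_cycle (T : finType) (e : rel T) (m : nat) : Prop :=
  exists f : T -> 'I_m, forall x y, e x y -> cycle_adj (f x) (f y).

Definition orientation (T : finType) (e a : rel T) : Prop :=
  (forall x y, a x y -> e x y) /\ (forall x y, e x y -> a x y != a y x).

Definition oriented_graph (k : nat) (h : rel 'I_k) : Prop :=
  (forall x, ~~ h x x) /\ (forall x y, h x y -> ~~ h y x).

(* Q_n: oriented path q_0..q_{n-1} on 'I_n; arc i joins q_i and q_{i+1}
   (0 <= i <= n-2), oriented q_i -> q_{i+1} iff d i = true. *)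
Definition Q_dirs (n : nat) (d : nat -> bool) : Prop :=
  [/\ d 0 = true, d 1 = true,
      (* the subpath (q_1, ..., q_{n-2}) (arcs 1 .. n-3) is alternating *)
      (forall i, 1 <= i -> i.+2 <= n - 2 -> d i.+1 = ~~ d i)
    &
      d (n - 3) = d (n - 2)].

Definition Q_arc (n : nat) (d : nat -> bool) (u v : 'I_n) : bool :=
  ((nat_of_ord v == u.+1) && d u) || ((nat_of_ord u == v.+1) && ~~ d v).
Arguments Q_arc n d u v : clear implicits.

(* Membership in F_n (up to isomorphism, a member on vertex set 'I_k):
   an oriented graph that is the image of Q_n under a vertex-surjective
   homomorphism. *)
Definition in_F (n k : nat) (h : rel 'I_k) : Prop :=
  oriented_graph h /\
  exists d : nat -> bool, Q_dirs n d /\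
  exists f : 'I_n -> 'I_k,
    (forall u v : 'I_n, Q_arc n d u v -> h (f u) (f v)) /\
    (forall y : 'I_k, exists x, f x = y).

Definition has_induced_copy (T : finType) (a : rel T) (k : nat) (h : rel 'I_k) : Prop :=
  exists g : 'I_k -> T, injective g /\ forall u v, h u v = a (g u) (g v).

(* Main.v *)
Require Import Defs.
From mathcomp Require Import all_boot zify.
Set Implicit Arguments. Unset Strict Implicit. Unset Printing Implicit Defensive.


Definition ddir (n i : nat) : bool := [|| i == 0, odd i | i == n - 2].

Definition Walk (T : Type) (a : T -> T -> bool) (n : nat) (phi : nat -> T) : Prop :=
  forall i, i < n - 1 -> if ddir n i then a (phi i) (phi i.+1) else a (phi i.+1) (phi i).

Lemma Qdirs_ddir n : 4 <= n -> ~~ odd n -> Q_dirs n (ddir n).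
Proof.
move=> h4 hev; split.
- by [].
- by rewrite /ddir /=.
- move=> i h1 h2; rewrite /ddir /=.
  have -> : (i.+1 == n - 2) = false by apply/eqP; lia.
  have -> : (i == n - 2) = false by apply/eqP; lia.
  have -> : (i == 0) = false by apply/eqP; lia.
  by rewrite !orbF.
- rewrite /ddir eqxx !orbT.
  have -> : n - 3 = (n - 2).-1 by lia.
  have : odd (n - 2).-1.+1 = false.
    have -> : (n - 2).-1.+1 = n - 2 by lia.
    have : odd (n - 2 + 2) = odd n by have -> : n - 2 + 2 = n by lia.
    by rewrite addn2 /= negbK => ->; apply/negbTE.
  by rewrite /= => /negbT; rewrite negbK => ->; rewrite orbT.
Qed.

Lemma Qdirs_eq n d : 4 <= n -> ~~ odd n -> Q_dirs n d ->
  forall i, i < n - 1 -> d i = ddir n i.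
Proof.
move=> h4 hev [d0 d1 dalt dlast].
have hodd : forall i, 1 <= i -> i <= n - 3 -> d i = odd i.
  elim=> [//|i IH] h1 h2.
  case: i IH h1 h2 => [|i] IH h1 h2; first by rewrite d1.
  rewrite dalt //; last by lia.
  by rewrite IH //; lia.
have on3 : odd (n - 3).
  have : odd (n - 3 + 3) = odd n by have -> : n - 3 + 3 = n by lia.
  by rewrite addn3 /= => h; move: hev; rewrite -h; case: (odd (n-3)).
move=> i hi.
rewrite /ddir.
case: (ltnP (n - 3) i) => hi3.
  have -> : i = n - 2 by lia.
  by rewrite -dlast hodd ?eqxx ?orbT //; lia.
case: i hi hi3 => [|i] hi hi3; first by rewrite d0.
rewrite hodd //=.
have -> : (i.+1 == n - 2) = false by apply/eqP; lia.
by rewrite orbF.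
Qed.


Definition tarc (m i j : nat) : bool :=
  [|| (i == 0) && (j == 1), (i == 1) && (j == 2), (i == 0) && (j == m.-1)
    | [&& 2 < i, odd i & (j == i.+1) || (j == i.-1)]].

Lemma tarc_orient m i j : odd m -> 3 <= m -> i < m -> j = i.+1 %% m ->
  tarc m i j != tarc m j i.
Proof.
move=> om m3 im ->.
case: (ltnP i.+1 m) => hi.
  rewrite modn_small //.
  case: i im hi => [|[|i]] im hi.
  - rewrite /tarc /=; case: m om m3 {im hi} => [|[|[|m]]] //=.
  - rewrite /tarc /=; case: m om m3 {im hi} => [|[|[|m]]] //=.
  - rewrite /tarc /=.
    rewrite !eqxx /= !orbT !andbT !negbK.
    by case: i {im hi} => [|i] //=; case: (odd i).
have -> : i = m.-1 by lia.
have -> : m.-1.+1 = m by lia.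
rewrite modnn /tarc /=.
have -> : (m.-1 == 0) = false by apply/eqP; lia.
have -> : (m.-1 == 1) = false by apply/eqP; lia.
have : odd m.-1 = false.
  by move: om m3; clear; case: m => [|m] //= + _; case: (odd m).
by move=> ->; rewrite eqxx /= !andbF.
Qed.


Lemma tarc2 m i j l : odd m -> 3 <= m -> tarc m i j -> tarc m j l ->
  [/\ i = 0, j = 1 & l = 2].
Proof.
move=> om m3.
have om1 : odd m.-1 = false.
  by move: om m3; clear; case: m => [|m] //= + _; case: (odd m).
rewrite /tarc.
case/or4P.
- by case/andP=> /eqP -> /eqP ->; case/or4P;
   [ by case/andP | by case/andP=> _ /eqP -> | by case/andP | by case/and3P ].
- case/andP=> /eqP -> /eqP ->; case/or4P;
   [ by case/andP | by case/andP | by case/andP | by case/and3P ].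
- case/andP=> /eqP -> /eqP ->; case/or4P;
   [ by case/andP=> /eqP; lia | by case/andP=> /eqP; lia | by case/andP=> /eqP; lia | ].
  by case/and3P=> _; rewrite om1.
- case/and3P=> h2 oi /orP [] /eqP ->; case/or4P;
   [ by case/andP | by case/andP=> /eqP; lia | by case/andP | | by case/andP=> /eqP; lia
   | by case/andP=> /eqP; lia | by case/andP=> /eqP; lia | ].
  + by case/and3P=> _; rewrite /= oi.
  + case/and3P=> _; case: i h2 oi => [|i] //= _.
    by case: (odd i).
Qed.

Lemma tarc_zz m s j l : odd m -> 3 <= m -> ~~ odd s -> 2 <= s -> s < m.-1 ->
  tarc m j s -> tarc m j l -> [/\ ~~ odd l, 2 <= l & l <= s.+2].
Proof.
move=> om m3 es s2 sm.
rewrite /tarc.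
case/or4P.
- by case/andP=> _ /eqP; lia.
- case/andP=> /eqP -> /eqP ->; case/or4P;
   [ by case/andP | by case/andP=> _ /eqP -> | by case/andP | by case/and3P ].
- by case/andP=> _ /eqP; lia.
- case/and3P=> j2 oj hs; case/or4P;
   [ by case/andP=> /eqP; lia | by case/andP=> /eqP; lia | by case/andP=> /eqP; lia | ].
  case/and3P=> _ _ /orP [] /eqP ->.
  + by move: hs => /orP [] /eqP hs; split; rewrite /= ?oj //; lia.
  + case: j j2 oj hs => [|j] //= j2 oj hs.
    by move: hs => /orP [] /eqP hs; split; rewrite /= ?oj //; lia.
Qed.

Lemma odd_pred_even n : 1 <= n -> ~~ odd n -> odd n.-1.
Proof. by case: n => [|n] //= _; rewrite negbK. Qed.

Lemma no_walk_tarc n psi : 4 <= n -> ~~ odd n -> Walk (tarc (n - 1)) n psi -> False.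
Proof.
move=> h4 hev W.
have om : odd (n - 1) by rewrite subn1 odd_pred_even //; lia.
have m3 : 3 <= n - 1 by lia.
have hn : n = (n./2).*2 by rewrite -{1}(odd_double_half n) (negbTE hev).
set h := n./2 in hn.
have W0 := W 0 ltac:(lia). have W1 := W 1 ltac:(lia).
rewrite /ddir /= in W0 W1.
case: (tarc2 om m3 W0 W1) => p0 p1 p2.
have on3 : odd (n - 3).
  have -> : n - 3 = (h - 2).*2.+1 by lia.
  by rewrite /= odd_double.
have Wa := W (n - 3) ltac:(lia). have Wb := W (n - 2) ltac:(lia).
rewrite /ddir on3 orbT in Wa. rewrite /ddir eqxx !orbT in Wb.
have e32 : (n - 3).+1 = n - 2 by lia.
rewrite e32 in Wa.
case: (tarc2 om m3 Wa Wb) => q0 q1 q2.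
case: (ltnP n 6) => h6.
  have e3 : n - 3 = 1 by lia.
  by move: q0; rewrite e3 p1.
have inv : forall i, (i.*2).+2 <= n - 4 ->
    [/\ ~~ odd (psi (i.*2).+2), 2 <= psi (i.*2).+2 & psi (i.*2).+2 <= (i.*2).+2].
  elim=> [|i IH] hi.
    by rewrite /= p2.
  case: (IH ltac:(lia)) => e1 e2 e3.
  have Wc := W (i.*2).+2 ltac:(lia).
  have Wd := W (i.*2).+3 ltac:(lia).
  have -> : (i.+1).*2.+2 = (i.*2).+4 by lia.
  move: Wc Wd; rewrite /ddir /= odd_double /=.
  try (have -> : ((i.*2).+2 == n - 2) = false by apply/eqP; lia).
  try (have -> : ((i.*2).+3 == n - 2) = false by apply/eqP; lia).
  move=> Wc Wd.
  have sm : psi (i.*2).+2 < (n - 1).-1 by lia.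
  case: (tarc_zz om m3 e1 e2 sm Wc Wd) => f1 f2 f3.
  split => //; lia.
have hi : ((h - 3).*2).+2 = n - 4 by lia.
case: (inv (h - 3) ltac:(lia)); rewrite hi => _ s2 s3.
have We := W (n - 4) ltac:(lia).
move: We; rewrite /ddir.
have -> : odd (n - 4) = false by rewrite -hi /= odd_double.
have -> : (n - 4 == 0) = false by apply/eqP; lia.
have -> : (n - 4 == n - 2) = false by apply/eqP; lia.
have -> : (n - 4).+1 = n - 3 by lia.
rewrite /= q0 /tarc /=.
case/orP => /eqP; lia.
Qed.


Lemma copy_to_walk (T : finType) (a : rel T) n k (h : rel 'I_k) :
  4 <= n -> ~~ odd n -> in_F n h -> has_induced_copy a h ->
  exists phi : nat -> T, Walk a n phi.
Proof.
move=> h4 hev [_ [d [Hd [f [fh _]]]]] [g [_ gh]].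
have n0 : 0 < n by lia.
pose u0 : 'I_n := Ordinal n0.
exists (fun i => g (f (insubd u0 i))) => i hi.
have vu : val (insubd u0 i) = i by rewrite val_insubd ifT //; lia.
have vv : val (insubd u0 i.+1) = i.+1 by rewrite val_insubd ifT //; lia.
rewrite -(Qdirs_eq h4 hev Hd hi).
case hdi : (d i).
- rewrite -gh; apply: fh; rewrite /Q_arc vu vv eqxx hdi //.
- rewrite -gh; apply: fh; rewrite /Q_arc vu vv eqxx hdi /= orbT //.
Qed.

Lemma walk_to_copy (T : finType) (e a : rel T) n :
  irreflexive e -> orientation e a -> 4 <= n -> ~~ odd n ->
  (exists phi : nat -> T, Walk a n phi) ->
  exists k (h : rel 'I_k), in_F n h /\ has_induced_copy a h.
Proof.
move=> eirr [ae aor] h4 hev [phi W].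
pose s := undup [seq phi i | i <- iota 0 n].
have us : uniq s by apply: undup_uniq.
have ms : forall i, i < n -> phi i \in s.
  by move=> i hi; rewrite mem_undup; apply: map_f; rewrite mem_iota; lia.
pose g (u : 'I_(size s)) := nth (phi 0) s u.
exists (size s), (fun u v => a (g u) (g v)).
have fP : forall u : 'I_n, index (phi u) s < size s.
  by move=> u; rewrite index_mem; apply: ms.
pose f (u : 'I_n) : 'I_(size s) := Ordinal (fP u).
have gf : forall u, g (f u) = phi u by move=> u; rewrite /g /= nth_index // ms.
split; last first.
  exists g; split => //.
  move=> u v /eqP; rewrite /g nth_uniq // => /eqP; apply: val_inj.
split.
  split.
    move=> x; apply/negP => /ae; by rewrite eirr.
  move=> x y hxy; have := aor _ _ (ae _ _ hxy); rewrite hxy; by case: (a _ _).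
exists (ddir n); split; first exact: Qdirs_ddir.
exists f; split.
  move=> u v; have ho := ltn_ord v; have ho2 := ltn_ord u.
  rewrite !gf /Q_arc => /orP [] /andP [] /eqP huv hd.
  - have := W u ltac:(lia); rewrite hd -huv.
    by have -> : phi v = phi (val v) by [].
  - have := W v ltac:(lia); rewrite (negbTE hd) -huv //.
move=> y.
have : g y \in s by rewrite /g mem_nth.
rewrite mem_undup => /mapP [i]; rewrite mem_iota => /andP [_ hi] hgy.
exists (Ordinal (hi : i < n)); apply: val_inj => /=.
by rewrite -hgy /g index_uniq.
Qed.


Lemma forward (T : finType) (e : rel T) n : symmetric e ->
  4 <= n -> ~~ odd n -> hom_to_cycle e (n - 1) ->
  exists a : rel T, orientation e a /\
    ~ (exists (k : nat) (h : rel 'I_k), in_F n h /\ has_induced_copy a h).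
Proof.
move=> esym h4 hev [f hf].
have om : odd (n - 1) by rewrite subn1 odd_pred_even //; lia.
have m3 : 3 <= n - 1 by lia.
exists (fun x y => e x y && tarc (n - 1) (f x) (f y)); split.
  split; first by move=> x y /andP [].
  move=> x y exy; rewrite exy -esym exy /=.
  move: (hf x y exy); rewrite /cycle_adj => /orP [] /eqP hxy.
  - exact: tarc_orient.
  - by rewrite eq_sym; apply: tarc_orient.
move=> [k [h [hF hc]]].
case: (copy_to_walk h4 hev hF hc) => phi W.
apply: (@no_walk_tarc n (fun i => val (f (phi i)))) => // i hi.
by move: (W i hi); case: (ddir n i) => /andP [].
Qed.


Lemma no3 (T : Type) (a : T -> T -> bool) n x0 x1 x2 x3 :
  4 <= n -> ~~ odd n -> a x0 x1 -> a x1 x2 -> a x2 x3 ->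
  exists phi, Walk a n phi.
Proof.
move=> h4 hev a01 a12 a23.
exists (fun i => if i == 0 then x0 else if i == n - 1 then x3 else if odd i then x1 else x2).
move=> i hi; rewrite /ddir.
have on1 : odd (n - 1) by rewrite oddB //; [rewrite /=; move: hev; case: (odd n) | lia].
case: (eqVneq i 0) => [->|i0].
  by rewrite /= (_ : (1 == n - 1) = false) //; apply/eqP; lia.
have -> : (i == n - 1) = false by apply/eqP; lia.
case oi : (odd i) => /=.
  have -> : (i.+1 == n - 1) = false.
    by apply/eqP=> h; move: on1; rewrite -h /= oi.
  by rewrite oi.
case: (eqVneq i (n - 2)) => [hi2|hi2] /=.
  by rewrite (_ : (i.+1 == n - 1) = true) //; apply/eqP; lia.
rewrite (_ : (i.+1 == n - 1) = false); last by apply/eqP; lia.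
by rewrite oi.
Qed.

Definition hin (T : finType) (a : rel T) x := [exists y, a y x].
Definition hout (T : finType) (a : rel T) x := [exists y, a x y].
Definition Mid (T : finType) (a : rel T) x := hin a x && hout a x.
Definition Tv (T : finType) (a : rel T) x := [exists y, a x y && Mid a y].
Definition Sv (T : finType) (a : rel T) x := [exists y, a y x && Mid a y].
Fixpoint reach (T : finType) (a : rel T) (j : nat) (x : T) : bool :=
  if j is j'.+1 then reach a j' x || [exists x', [exists z, [&& a z x', a z x & reach a j' x']]]
  else Sv a x.

Lemma zig (T : finType) (a : rel T) j : forall x, reach a j x -> forall N, j <= N ->
  exists p : nat -> T, [/\ Sv a (p 0), p N.*2 = x &
    forall i, i < N -> a (p i.*2.+1) (p i.*2) && a (p i.*2.+1) (p i.*2.+2)].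
Proof.
elim: j => [|j IH] x /=.
  move=> hS N _; have := hS; case/existsP=> y /andP [ayx _].
  exists (fun i => if odd i then y else x); split.
  - by [].
  - by rewrite odd_double.
  - by move=> i _; rewrite /= !odd_double /= ayx.
case/orP.
  by move=> hr N hN; apply: IH => //; lia.
case/existsP=> x' /existsP [z /and3P [azx' azx hr]] [|N] hN //.
case: (IH x' hr N ltac:(lia)) => p [p0 pN parc].
exists (fun i => if i == N.*2.+1 then z else if i == N.*2.+2 then x else p i); split.
- by [].
- by rewrite doubleS eqSS (_ : (N.*2.+1 == N.*2) = false) ?eqxx //; apply/eqP; lia.
- move=> i hi.
  case: (ltnP i N) => hiN.
    have -> : (i.*2.+1 == N.*2.+1) = false by apply/eqP; lia.
    have -> : (i.*2.+1 == N.*2.+2) = false by apply/eqP; lia.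
    have -> : (i.*2 == N.*2.+1) = false by apply/eqP; lia.
    have -> : (i.*2 == N.*2.+2) = false by apply/eqP; lia.
    have -> : (i.*2.+2 == N.*2.+1) = false by apply/eqP; lia.
    have -> : (i.*2.+2 == N.*2.+2) = false by apply/eqP; lia.
    exact: parc.
  have -> : i = N by lia.
  rewrite eqxx (_ : (N.*2 == N.*2.+1) = false); last by apply/eqP; lia.
  rewrite (_ : (N.*2 == N.*2.+2) = false); last by apply/eqP; lia.
  by rewrite pN eqxx (_ : (N.*2.+2 == N.*2.+1) = false) ?azx' ?azx //; apply/eqP; lia.
Qed.


Lemma key (T : finType) (a : rel T) n w x j :
  4 <= n -> ~~ odd n -> Tv a w -> a w x -> reach a j x -> j < n./2 - 2 ->
  exists phi, Walk a n phi.
Proof.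
move=> h4 hev hT awx hr hj.
have hn : n = (n./2).*2 by rewrite -{1}(odd_double_half n) (negbTE hev).
set N := n./2 - 3.
case: (zig hr (N := N) ltac:(lia)) => p [p0 pN parc].
case/existsP: p0 => y /andP [ayu /andP [/existsP [b0 ab0y] _]].
case/existsP: hT => m1 /andP [awm1 /andP [_ /existsP [m2 am1m2]]].
exists (fun i => if i == 0 then b0 else if i == 1 then y else if i <= n - 4 then p (i - 2)
  else if i == n - 3 then w else if i == n - 2 then m1 else m2).
move=> i hi; rewrite /ddir.
case: (eqVneq i 0) => [->|i0] /=; first by [].
case: (eqVneq i 1) => [->|i1] /=; first by rewrite ifT //; lia.
rewrite (_ : (i.+1 == 1) = false); last by apply/eqP; lia.
case: (leqP i.+1 (n - 4)) => hi4.
  rewrite (_ : i <= n - 4 = true); last by lia.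
  have h2 : i - 2 = odd i + ((i - 2)./2).*2.
    by rewrite -{2}(odd_double_half (i - 2)) oddB ?addbF //; lia.
  rewrite (_ : (i == n - 2) = false); last by apply/eqP; lia.
  have ht : (i - 2)./2 < N by lia.
  have e1 : i.+1 - 2 = (i - 2).+1 by lia.
  rewrite e1 h2.
  case: (odd i) ht => /= ht.
    by case/andP: (parc _ ht) => _; rewrite -addn2.
  by case/andP: (parc _ ht).
case: (eqVneq i (n - 4)) => [hi4'|hi4'].
  rewrite (_ : i <= n - 4 = true); last by lia.
  rewrite (_ : odd i = false); last by rewrite hi4' oddB /= ?(negbTE hev) //; lia.
  rewrite (_ : (i == n - 2) = false) /=; last by apply/eqP; lia.
  rewrite (_ : (i.+1 == n - 3) = true); last by apply/eqP; lia.
  rewrite (_ : i - 2 = N.*2); last by lia.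
  by rewrite pN.
rewrite (_ : i <= n - 4 = false); last by lia.
case: (eqVneq i (n - 3)) => [hi3|hi3].
  rewrite (_ : odd i = true) /=; last by rewrite hi3 oddB /= ?(negbTE hev) //; lia.
  rewrite (_ : (i.+1 == n - 3) = false); last by apply/eqP; lia.
  by rewrite (_ : (i.+1 == n - 2) = true) //; apply/eqP; lia.
have hi2 : i = n - 2 by lia.
rewrite hi2 eqxx orbT.
rewrite (_ : ((n - 2).+1 == n - 3) = false); last by apply/eqP; lia.
by rewrite (_ : ((n - 2).+1 == n - 2) = false) //; apply/eqP; lia.
Qed.


Definition cnt (K : nat) (P : nat -> bool) := count (fun j => ~~ P j) (iota 0 K).

Lemma cnt_le K (P Q : nat -> bool) : (forall j, P j -> Q j) -> cnt K Q <= cnt K P.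
Proof.
move=> hPQ; apply: sub_count => j /=; apply: contra; exact: hPQ.
Qed.

Lemma cnt_max K P : cnt K P <= K.
Proof. by rewrite /cnt (leq_trans (count_size _ _)) // size_iota. Qed.

Lemma cnt_all K (P : nat -> bool) : (forall j, P j) -> cnt K P = 0.
Proof.
move=> hP; rewrite /cnt; elim: (iota 0 K) => //= j s ->; by rewrite hP.
Qed.

Lemma cnt_none K (P : nat -> bool) : (forall j, j < K -> ~~ P j) -> cnt K P = K.
Proof.
move=> hP; rewrite /cnt -[in RHS](size_iota 0 K) -count_predT.
apply: eq_in_count => j; rewrite mem_iota => /andP [_ hj] /=; exact: hP.
Qed.

Lemma cnt_shift K (P Q : nat -> bool) : (forall j, Q j -> P j.+1) -> cnt K P <= (cnt K Q).+1.
Proof.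
move=> hQP; case: K => [|K]; first by [].
have h2 : count (fun j => ~~ Q j) (iota 0 K) <= count (fun j => ~~ Q j) (iota 0 K.+1).
  by rewrite -addn1 iotaD count_cat leq_addr.
have e : iota 1 K = map (addn 1) (iota 0 K) by rewrite -iotaDl.
have h1 : count (fun j => ~~ P j) (iota 1 K) <= count (fun j => ~~ Q j) (iota 0 K).
  rewrite e count_map; apply: sub_count => j /=; apply: contra; rewrite add1n; exact: hQP.
move: h2; rewrite /cnt /=.
by case: (~~ P 0) => /=; lia.
Qed.


Lemma reach_all (T : finType) (a : rel T) x : Sv a x -> forall j, reach a j x.
Proof. by move=> hS; elim=> //= j ->. Qed.

Lemma backward (T : finType) (e a : rel T) n :
  irreflexive e -> 4 <= n -> ~~ odd n -> orientation e a ->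
  ~ (exists phi, Walk a n phi) -> hom_to_cycle e (n - 1).
Proof.
move=> eirr h4 hev [ae aor] noW.
have no3 : forall x0 x1 x2 x3, a x0 x1 -> a x1 x2 -> a x2 x3 -> False.
  by move=> x0 x1 x2 x3 h1 h2 h3; apply: noW; exact: (no3 h4 hev h1 h2 h3).
have hn : n = (n./2).*2 by rewrite -{1}(odd_double_half n) (negbTE hev).
set K := n./2 - 2.
have hm : n - 1 = K.*2 + 3 by lia.
pose c x := cnt K (fun j => reach a j x).
pose c' x := cnt K (fun j => [exists y, a x y && reach a j y]).
pose col x := if Mid a x then 1 else if Tv a x then 0 else if hin a x then (c x).*2.+2
  else ((c' x).*2 + 3) %% (n - 1).
have cmax : forall x, c x <= K by move=> x; exact: cnt_max.
have colm : forall x, col x < n - 1.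
  move=> x; rewrite /col; case: (Mid a x) => //; first lia.
  case: (Tv a x) => //; first lia.
  case: (hin a x); first by have := cmax x; lia.
  by rewrite ltn_mod; lia.
have arc : forall x y, a x y ->
    (col y == (col x).+1 %% (n - 1)) || (col x == (col y).+1 %% (n - 1)).
  move=> x y axy.
  have hinY : hin a y by apply/existsP; exists x.
  have houtX : hout a x by apply/existsP; exists y.
  have nTy : ~~ Tv a y.
    apply/negP => /existsP [v /andP [ayv /andP [_ /existsP [w avw]]]].
    exact: (no3 _ _ _ _ axy ayv avw).
  case hMx : (Mid a x).
    have nMy : ~~ Mid a y.
      apply/negP => /andP [_ /existsP [w ayw]].
      case/andP: hMx => /existsP [z azx] _.
      exact: (no3 _ _ _ _ azx axy ayw).
    have hSy : Sv a y by apply/existsP; exists x; rewrite axy hMx.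
    have c0 : c y = 0 by apply: cnt_all; apply: reach_all.
    by rewrite /col hMx (negbTE nMy) (negbTE nTy) hinY c0 /= modn_small ?eqxx //; lia.
  case hTx : (Tv a x).
    case hMy : (Mid a y).
      by rewrite /col hMx hTx hMy modn_small ?eqxx //; lia.
    have cK : c y = K.
      apply: cnt_none => j hj; apply/negP => hr.
      by apply: noW; apply: (key h4 hev hTx axy hr).
    rewrite /col hMx hTx hMy (negbTE nTy) hinY cK.
    rewrite (_ : (K.*2.+2).+1 = n - 1); last by lia.
    by rewrite modnn orbT.
  have nhx : hin a x = false.
    by apply/negbTE; apply/negP => hx; move: hMx; rewrite /Mid hx houtX.
  have nMy : Mid a y = false.
    apply/negbTE; apply/negP => hMy; move: hTx; rewrite /Tv => /negbT/negP; apply.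
    by apply/existsP; exists y; rewrite axy hMy.
  have l1 : c' x <= c y.
    apply: cnt_le => j hr; apply/existsP; exists y; by rewrite axy hr.
  have l2 : c y <= (c' x).+1.
    apply: cnt_shift => j /existsP [y' /andP [axy' hr]] /=.
    by apply/orP; right; apply/existsP; exists y'; apply/existsP; exists x; rewrite axy' axy hr.
  have l3 : c y <= K by apply: cnt_max.
  rewrite /col hMx hTx nhx nMy (negbTE nTy) hinY hm.
  case: (ltnP (c' x) K) => hc.
    rewrite (modn_small (_ : (c' x).*2 + 3 < K.*2 + 3)); last by lia.
    case: (eqVneq (c y) (c' x)) => [->|hne].
      rewrite (modn_small (_ : (c' x).*2.+3 < K.*2 + 3)); last by lia.
      by apply/orP; right; apply/eqP; lia.
    have -> : c y = (c' x).+1 by lia.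
    rewrite (modn_small (_ : ((c' x).*2 + 3).+1 < K.*2 + 3)); last by lia.
    by apply/orP; left; apply/eqP; lia.
  have e1 : c' x = K by lia.
  have e2 : c y = K by lia.
  rewrite e1 e2 (_ : K.*2 + 3 = (K.*2.+2).+1); last by lia.
  by rewrite modnn eqxx orbT.
have m0 : 0 < n - 1 by lia.
exists (fun x => insubd (Ordinal m0) (col x)) => x y exy.
rewrite /cycle_adj !val_insubd !ifT ?colm //.
have := aor _ _ exy; case axy : (a x y) => /=.
  by move=> _; apply: arc.
case ayx : (a y x) => // _.
by rewrite orbC; apply: arc.
Qed.

Unset Implicit Arguments.

Theorem mainTheorem11 (T : finType) (e : rel T)
  (e_sym : symmetric e) (e_irr : irreflexive e)
  (n : nat) (hn4 : 4 <= n) (hn_even : ~~ odd n) :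
  hom_to_cycle e (n - 1) <->
  exists a : rel T, orientation e a /\
    ~ (exists (k : nat) (h : rel 'I_k), in_F n h /\ has_induced_copy a h).
Proof.
split.
  exact: forward.
move=> [a [ho hno]].
apply: (backward e_irr hn4 hn_even ho) => hw.
apply: hno; exact: (walk_to_copy e_irr ho hn4 hn_even hw).
Qed.
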